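(* Consider a $K\times N$ multicast switch with a traffic pattern having rational rate vector $\mathbf r$ and enhanced rate vector $\mathbf e$, where fanout splitting and linear network coding are allowed. The following are equivalent: (1) $\mathbf e\in STAB(G)$, where $G$ is the enhanced conflict graph; (2) there exist a coding scheme and a frame-based schedule with frame size $F$ such that for every flow $(i,J)$, $r_{iJ}F$ is an integer, and, for all $n\ge1$, the oldest $r_{iJ}F$ packets that were in the queue of flow $(i,J)$ at the end of frame $n-1$ are served by the end of frame $n$ (and if there were fewer than $r_{iJ}F$ packets, all of them are served).
   Context: Switch: inputs $[K]$, outputs $[N]$, slotted time. A flow is $(i,J)$ with input $i$ and nonempty fanout $J\subseteq[N]$, with rate $r_{iJ}$; each flow's packets arrive into a queue at input $i$ (queues start empty). Subflows: $(i,J,j)$, $j\in J$. A switch configuration for one slot: each input idles or picks one of its flows $(i,J)$ and connects to a subset of $J$, sending one packet to all connected outputs; each output is connected to at most one input. With linear network coding the packet sent for flow $(i,J)$ is a linear combination over a finite field of packets of that flow held at input $i$. A frame is a block of $F$ consecutive slots; a frame-based schedule is a fixed sequence of $F$ configurations repeated in every frame. A packet is served when it has been conveyed to (is decodable at) all outputs in the fanout of its flow and removed from the queue. Enhanced rate vector: $\mathbf e_{iJj}=r_{iJ}$. Enhanced conflict graph $G$: one vertex per subflow; distinct $(i,J,j),(i',J',j')$ adjacent iff $j=j'$, or $i=i'$ and $J\ne J'$. $STAB(G)$ is the convex hull of incidence vectors of stable sets of $G$. *)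

(* Defs.v *)
From HB Require Import structures.
From mathcomp Require Import all_boot all_order all_algebra.
Set Implicit Arguments. Unset Strict Implicit. Unset Printing Implicit Defensive.
Import Order.TTheory GRing.Theory Num.Theory.
Local Open Scope ring_scope.

Section Switch.
Variables K N : nat.

(* A subflow (i,J,j); only triples with J nonempty and j \in J are vertices. *)
Definition subflow := ('I_K * {set 'I_N} * 'I_N)%type.

Definition is_subflow (v : subflow) : bool :=
  let: (i, J, j) := v in (J != set0) && (j \in J).

Definition adjacent (v w : subflow) : bool :=
  let: (i, J, j) := v in let: (i', J', j') := w in
  (v != w) && ((j == j') || ((i == i') && (J != J'))).

Definition stable (S : {set subflow}) : bool :=
  [forall v in S, is_subflow v] && [forall v in S, forall w in S, ~~ adjacent v w].

Definition enhanced (r : 'I_K -> {set 'I_N} -> rat) (v : subflow) : rat :=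
  let: (i, J, j) := v in r i J.

Definition in_STAB (x : subflow -> rat) : Prop :=
  exists lam : {set subflow} -> rat,
    [/\ forall S, 0 <= lam S,
        forall S, lam S != 0 -> stable S,
        \sum_(S : {set subflow}) lam S = 1
      & forall v, is_subflow v -> x v = \sum_(S : {set subflow}) lam S * (v \in S)%:R].

(* A configuration: input i idles (None) or serves flow (i,J) and is
   connected to the output set T (Some (J,T)). *)
Definition config := 'I_K -> option ({set 'I_N} * {set 'I_N}).

Definition valid_config (c : config) : Prop :=
  (forall i J T, c i = Some (J, T) -> J != set0 /\ T \subset J) /\
  (forall i i' J T J' T', i != i' -> c i = Some (J, T) -> c i' = Some (J', T') ->
     [disjoint T & T']).

(* a i J s = number of packets of flow (i,J) arriving during slot s. *)
Definition arrivals := 'I_K -> {set 'I_N} -> nat -> nat.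

(* packets of flow (i,J) arrived in slots 0..t-1; packets are numbered
   0,1,2,... in order of arrival (smaller index = older). *)
Definition cumA (a : arrivals) (i : 'I_K) (J : {set 'I_N}) (t : nat) : nat := \sum_(s < t) a i J s.

Section Coding.
Variable Fld : finFieldType.

(* coding scheme: given the arrival process, the slot s and the input i,
   the coding vector (coefficients on the packets 0,1,2,... of the flow
   served by i in slot s) of the packet sent. *)
Definition coding := arrivals -> nat -> 'I_K -> nat -> Fld.

Definition causal (code : coding) : Prop :=
  forall a a' s, (forall i J s', (s' < s)%N -> a i J s' = a' i J s') ->
    code a s = code a' s.

Variables (F : nat) (sched : nat -> config) (code : coding) (a : arrivals).

Definition slot_cfg (s : nat) : config := sched (s %% F).

Definition recv (i : 'I_K) (J : {set 'I_N}) (j : 'I_N) (s : nat) : bool :=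
  match slot_cfg s i with
  | Some (J', T) => (J' == J) && (j \in T)
  | None => false
  end.

Definition decodable (i : 'I_K) (J : {set 'I_N}) (j : 'I_N) (k t : nat) : Prop :=
  exists w : nat -> Fld, forall m,
    \sum_(s < t | recv i J j s) w s * code a s i m = (m == k)%:R.

(* served by time t (end of slot t-1): decodable at every output of J *)
Definition served (i : 'I_K) (J : {set 'I_N}) (k t : nat) : Prop := forall j, j \in J -> decodable i J j k t.

Definition present (i : 'I_K) (J : {set 'I_N}) (k t : nat) : Prop := (k < cumA a i J t)%N /\ ~ served i J k t.

Definition valid_coding : Prop :=
  forall s i J T, slot_cfg s i = Some (J, T) ->
    forall m, code a s i m != 0 -> present i J m s.

(* The packet k is among
   the oldest r_{iJ}F iff the number of queued packets older than k is
   < r_{iJ}F. *)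
Definition frame_guarantee (r : 'I_K -> {set 'I_N} -> rat) : Prop :=
  forall n i J, (0 < n)%N -> J != set0 ->
  forall k (older : seq nat), uniq older ->
    (forall k', k' \in older <-> ((k' < k)%N /\ present i J k' (n.-1 * F))) ->
    present i J k (n.-1 * F) ->
    (size older)%:R < r i J * F%:R ->
    served i J k (n * F).

End Coding.
End Switch.

(* Main.v *)
Require Import Defs.
From HB Require Import structures.
From mathcomp Require Import all_boot all_order all_algebra.
From mathcomp Require Import ring zify.
From Stdlib Require Import ClassicalEpsilon FunctionalExtensionality.
Import Order.TTheory GRing.Theory Num.Theory.
Local Open Scope ring_scope.

Module Helpers.
Set Implicit Arguments. Unset Strict Implicit. Unset Printing Implicit Defensive.

Definition pb (P : Prop) : bool := if excluded_middle_informative P then true else false.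
Lemma pbP P : reflect P (pb P).
Proof. rewrite /pb; case: excluded_middle_informative => h; by constructor. Qed.
Lemma pb_ext P Q : (P <-> Q) -> pb P = pb Q.
Proof. move=> h; apply/idP/idP => /pbP ?; apply/pbP; tauto. Qed.

Lemma sum_filter_nth (R : nmodType) (f : nat -> R) t (P : pred nat) :
  \sum_(s < t | P s) f s = \sum_(y < size [seq s <- index_iota 0 t | P s]) f (nth 0%N [seq s <- index_iota 0 t | P s] y).
Proof. by rewrite -big_mkord -big_filter (big_nth 0%N) big_mkord. Qed.

Lemma recv_mod K N F (sched : nat -> config K N) i J j s :
  recv F sched i J j s = recv F sched i J j (s %% F)%N.
Proof. by rewrite /recv /slot_cfg modn_mod. Qed.

Section Span.
Variables (K N : nat) (Fld : finFieldType) (F : nat) (sched : nat -> config K N)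
  (code : coding K N Fld) (a : arrivals K N) (i : 'I_K) (J : {set 'I_N}) (j : 'I_N).

Definition spanR (t : nat) (v : nat -> Fld) : Prop :=
  exists w : nat -> Fld, forall m,
    \sum_(s < t | recv F sched i J j s) w s * code a s i m = v m.

Lemma decodableE k t : decodable F sched code a i J j k t <-> spanR t (fun m => (m == k)%:R).
Proof. by []. Qed.

Lemma spanR_ext t v v' : (forall m, v m = v' m) -> spanR t v -> spanR t v'.
Proof. by move=> e [w hw]; exists w => m; rewrite hw e. Qed.

Lemma spanR0 t : spanR t (fun _ => 0).
Proof. by exists (fun _ => 0) => m; rewrite big1 // => s _; rewrite mul0r. Qed.

Lemma spanRD t v v' : spanR t v -> spanR t v' -> spanR t (fun m => v m + v' m).
Proof.
move=> [w hw] [w' hw']; exists (fun s => w s + w' s) => m.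
by rewrite -hw -hw' -big_split /=; apply: eq_bigr => s _; rewrite mulrDl.
Qed.

Lemma spanRZ t c v : spanR t v -> spanR t (fun m => c * v m).
Proof.
move=> [w hw]; exists (fun s => c * w s) => m.
by rewrite -hw mulr_sumr; apply: eq_bigr => s _; rewrite mulrA.
Qed.

Lemma spanR_sum t (X : eqType) (s : seq X) (P : pred X) (f : X -> nat -> Fld) :
  (forall x, x \in s -> P x -> spanR t (f x)) -> spanR t (fun m => \sum_(x <- s | P x) f x m).
Proof.
elim: s => [|x s IH] h.
  by apply: spanR_ext (spanR0 t) => m; rewrite big_nil.
have IH' := IH (fun y ys => h y (@mem_behead _ (x :: s) y ys)).
case Px: (P x).
  apply: spanR_ext (spanRD (h x (mem_head _ _) Px) IH') => m; by rewrite big_cons Px.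
by apply: spanR_ext IH' => m; rewrite big_cons Px.
Qed.

Lemma spanR_mono t t' v : (t <= t')%N -> spanR t v -> spanR t' v.
Proof.
move=> le [w hw]; exists (fun s => if (s < t)%N then w s else 0) => m.
rewrite -hw (bigID (fun s : 'I_t' => (s < t)%N)) /= [X in _ + X]big1 ?addr0; last first.
  by move=> s /andP[_ /negbTE ->]; rewrite mul0r.
rewrite (big_ord_widen_cond _ (fun s => recv F sched i J j s) (fun s => w s * code a s i m) le).
by apply: eq_bigr => s /andP[_ ->].
Qed.

Lemma spanR_gen t s : (s < t)%N -> recv F sched i J j s -> spanR t (code a s i).
Proof.
move=> st rs; exists (fun s' => (s' == s)%:R) => m.
rewrite (bigD1 (Ordinal st)) //= eqxx mul1r big1 ?addr0 // => s' /andP[_ ne].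
suff /negbTE -> : (s' : nat) != s by rewrite mul0r.
by apply: contra ne => /eqP e; apply/eqP/val_inj.
Qed.
Lemma rank_bound t D : (forall k, (k < D)%N -> spanR t (fun m => (m == k)%:R)) ->
  (D <= count (recv F sched i J j) (index_iota 0 t))%N.
Proof.
move=> h.
pose sl := [seq s <- index_iota 0 t | recv F sched i J j s].
have [ww hw] : exists ww : 'I_D -> nat -> Fld, forall k : 'I_D, forall m,
    \sum_(s < t | recv F sched i J j s) ww k s * code a s i m = (m == k)%:R.
  apply: (@fin_all_exists _ (fun _ => nat -> Fld) (fun (k : 'I_D) (w : nat -> Fld) => forall m,
    \sum_(s < t | recv F sched i J j s) w s * code a s i m = (m == k)%:R)).
  by move=> k; exact: h k (ltn_ord k).
pose W : 'M[Fld]_(D, size sl) := \matrix_(k, y) ww k (nth 0%N sl y).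
pose C : 'M[Fld]_(size sl, D) := \matrix_(y, m) code a (nth 0%N sl y) i m.
have WC : W *m C = 1%:M.
  apply/matrixP => k m; rewrite !mxE.
  have e := hw k m; rewrite (sum_filter_nth (fun s => ww k s * code a s i m)) -/sl in e.
  rewrite eq_sym -e; apply: eq_bigr => y _; by rewrite !mxE.
rewrite -size_filter -/sl -{1}(mxrank1 Fld D) -WC.
exact: (leq_trans (mxrankM_maxl W C) (rank_leq_col W)).
Qed.
End Span.


Section Down.
Variables K N : nat.
Local Notation sf := (subflow K N).

Definition repr_by (lam : {set sf} -> rat) (y : sf -> rat) : Prop :=
  [/\ forall S, 0 <= lam S, forall S, lam S != 0 -> stable S,
      \sum_(S : {set sf}) lam S = 1
    & forall v, is_subflow v -> y v = \sum_(S : {set sf}) lam S * (v \in S)%:R].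

Lemma repr_ext lam y y' : (forall v, is_subflow v -> y v = y' v) -> repr_by lam y -> repr_by lam y'.
Proof. by move=> e [h1 h2 h3 h4]; split => // v sv; rewrite -e // h4. Qed.

Lemma stable_sub (S S' : {set sf}) : S \subset S' -> stable S' -> stable S.
Proof.
move=> /subsetP sub /andP[/forallP h1 /forallP h2]; apply/andP; split.
  by apply/forallP => v; apply/implyP => vS; exact: (implyP (h1 v) (sub v vS)).
apply/forallP => v; apply/implyP => vS; apply/forallP => w; apply/implyP => wS.
by have /forallP/(_ w)/implyP := implyP (h2 v) (sub _ vS); apply; exact: sub.
Qed.

Lemma reindexU1 (v : sf) (f : {set sf} -> rat) :
  \sum_(S : {set sf} | v \notin S) f (v |: S) = \sum_(S : {set sf} | v \in S) f S.
Proof.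
symmetry; rewrite (reindex_onto (fun S => v |: S) (fun S => S :\ v)) /=; last by move=> S vS; rewrite setD1K.
apply: eq_bigl => S; rewrite setU11 /=.
case vS: (v \in S).
  apply/negbTE; apply/eqP => e.
  by move: vS; rewrite -e setD11.
by rewrite setU1K ?vS ?eqxx.
Qed.

Definition scl (lam : {set sf} -> rat) (v : sf) (t : rat) (S : {set sf}) : rat :=
  if v \in S then t * lam S else lam S + (1 - t) * lam (v |: S).

Lemma scl_sum lam v t (g : {set sf} -> rat) :
  \sum_(S : {set sf}) scl lam v t S * g S =
  t * \sum_(S : {set sf} | v \in S) lam S * g S + \sum_(S : {set sf} | v \notin S) lam S * g S
  + (1 - t) * \sum_(S : {set sf} | v \in S) lam S * g (S :\ v).
Proof.
rewrite (bigID (fun S : {set sf} => v \in S)) /= -addrA; congr (_ + _).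
  by rewrite mulr_sumr; apply: eq_bigr => S vS; rewrite /scl vS mulrA.
rewrite -(reindexU1 v (fun S => lam S * g (S :\ v))) mulr_sumr -big_split /=.
apply: eq_bigr => S vS; rewrite /scl (negbTE vS) setU1K // mulrDl mulrA //.
Qed.

Lemma scale_rep lam y v t : repr_by lam y -> 0 <= t <= 1 ->
  repr_by (scl lam v t) (fun w => if w == v then t * y v else y w).
Proof.
move=> [h1 h2 h3 h4] /andP[t0 t1].
have gen (g : {set sf} -> rat) : (forall S : {set sf}, v \in S -> g (S :\ v) = g S) ->
    \sum_(S : {set sf}) scl lam v t S * g S = \sum_(S : {set sf}) lam S * g S.
  move=> hg; rewrite scl_sum [in RHS](bigID (fun S : {set sf} => v \in S)) /=.
  rewrite [X in _ + (1 - t) * X](eq_bigr (fun S => lam S * g S)); last by move=> S vS; rewrite hg.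
  idtac.
  move: (\sum_(i : {set sf} | v \in i) lam i * g i) (\sum_(i : {set sf} | v \notin i) lam i * g i) => X Y.
  ring.
split.
- move=> S; rewrite /scl; case: ifP => _; first exact: mulr_ge0.
  by apply: addr_ge0 => //; apply: mulr_ge0; rewrite ?subr_ge0.
- move=> S; rewrite /scl; case: ifP => vS.
    by move=> nz; apply: h2; apply: contraNneq nz => ->; rewrite mulr0.
  case: (eqVneq (lam S) 0) => [e|]; last by move=> ne _; exact: h2.
  rewrite e add0r => nz; apply: (@stable_sub _ (v |: S)); first exact: subsetUr.
  by apply: h2; apply: contraNneq nz => ->; rewrite mulr0.
- by rewrite -h3 (eq_bigr (fun S => scl lam v t S * 1)) ?(gen (fun _ => 1)) //;
    [apply: eq_bigr => S _; rewrite mulr1 | move=> S _; rewrite mulr1].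
- move=> w sw; case: eqP => [e|/eqP nwv].
    subst w; rewrite scl_sum (h4 _ sw).
    rewrite [X in _ = _ + _ * X]big1; last by move=> S _; rewrite setD11 mulr0.
    rewrite [X in _ = _ + X + _]big1; last by move=> S vS; rewrite (negbTE vS) mulr0.
    rewrite mulr0 !addr0 [in LHS](bigID (fun S : {set sf} => v \in S)) /=.
    by rewrite [X in _ * (_ + X) = _]big1 ?addr0 // => S vS; rewrite (negbTE vS) mulr0.
  rewrite h4 // gen // => S vS; by rewrite !inE nwv.
Qed.

Lemma down_closed lam y (x : sf -> rat) : repr_by lam y ->
  (forall v, is_subflow v -> 0 <= x v <= y v) -> exists lam', repr_by lam' x.
Proof.
move=> hl hx.
suff [lam' hl']: exists lam', repr_by lam' (fun v => if v \in enum [set: sf] then x v else y v).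
  by exists lam'; apply: repr_ext hl' => v _; rewrite mem_enum inE.
elim: (enum [set: sf]) (enum_uniq [set: sf]) => [|v s IH] /=.
  by move=> _; exists lam; apply: repr_ext hl.
move=> /andP[vs us]; have [lam1 h1] := IH us.
pose t := if is_subflow v then x v / y v else 1.
have tb : 0 <= t <= 1.
  rewrite /t; case: ifP => sv //; have /andP[x0 xy] := hx v sv.
  have y0 : 0 <= y v := le_trans x0 xy.
  apply/andP; split; first exact: divr_ge0.
  have [->|ny] := eqVneq (y v) 0; first by rewrite invr0 mulr0.
  by rewrite ler_pdivrMr ?mul1r // lt_def ny.
exists (scl lam1 v t); apply: repr_ext (scale_rep v h1 tb) => w sw.
rewrite in_cons; case: eqP => [e|/eqP nwv] /=; last by [].
subst w; rewrite (negbTE vs) /t sw.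
have /andP[x0 xy] := hx v sw.
have [e|ny] := eqVneq (y v) 0.
  by rewrite e mulr0; apply/eqP; rewrite eq_le x0 -e xy.
by rewrite divfK.
Qed.

End Down.


Lemma count_periodic F (p : pred nat) n : (forall s, p s = p (s %% F)%N) ->
  count p (index_iota 0 (n * F)) = (n * count p (index_iota 0 F))%N.
Proof.
move=> hp; rewrite /index_iota !subn0; elim: n => [|n IH]; first by rewrite !mul0n.
rewrite mulSnr iotaD count_cat IH add0n mulSnr.
rewrite -[in iota (n * F)%N F](addn0 (n * F)%N) iotaDl count_map.
congr (_ + _)%N; apply: eq_count => x /=.
by rewrite hp modnMDl -hp.
Qed.

Section Conv.
Variables (K N : nat) (r : 'I_K -> {set 'I_N} -> rat) (F : nat) (sched : nat -> config K N)
  (Fld : finFieldType) (code : coding K N Fld).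
Hypotheses (F0 : (0 < F)%N) (hval : forall s, (s < F)%N -> valid_config (sched s))
  (hfg : forall a, frame_guarantee F sched code a r).

Lemma served_mono a i J k t t' : (t <= t')%N ->
  served F sched code a i J k t -> served F sched code a i J k t'.
Proof. by move=> le h j jJ; exact: spanR_mono le (h j jJ). Qed.


Lemma count_lb i J j b : J != set0 -> j \in J -> r i J * F%:R = b%:R ->
  (b <= count (recv F sched i J j) (index_iota 0 F))%N.
Proof.
move=> J0 jJ hb.
apply: contraT; rewrite -ltnNge => hc.
pose M := (b * b)%N.
pose a0 : arrivals K N := fun i' J' s => if [&& i' == i, J' == J & s == 0%N] then M else 0%N.
have cum t : (0 < t)%N -> cumA a0 i J t = M.
  case: t => [//|t _]; rewrite /cumA big_ord_recl /= /a0 !eqxx /= big1_eq addn0 //.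
have Q : forall m k, (k < M)%N -> (k < m * b)%N -> served F sched code a0 i J k (m.+1 * F)%N.
  elim=> [|m IH] k kM km; first by rewrite mul0n in km.
  case: (pbP (served F sched code a0 i J k (m.+1 * F)%N)) => [sv|nsv].
    by apply: served_mono sv; rewrite leq_mul2r ltnW ?orbT.
  have pk : present F sched code a0 i J k (m.+1 * F)%N.
    by split => //; rewrite cum ?muln_gt0.
  pose older := [seq k' <- iota 0 k | pb (present F sched code a0 i J k' (m.+1 * F)%N)].
  apply: (hfg (n:=m.+2)) (older) _ _ pk _ => //.
  - by rewrite filter_uniq ?iota_uniq.
  - move=> k'; rewrite mem_filter mem_iota add0n /=; split.
      by case/andP => /pbP p l.
    by case=> l p; apply/andP; split => //; apply/pbP.
  - have sz : (size older <= k - m * b)%N.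
      rewrite -(size_iota (m * b) (k - m * b)); apply: uniq_leq_size.
        by rewrite filter_uniq ?iota_uniq.
      move=> k'; rewrite mem_filter mem_iota /= => /andP[/pbP [_ nsk] lk].
      rewrite mem_iota; apply/andP; split; last by lia.
      rewrite leqNgt; apply/negP => lt; apply: nsk; apply: IH => //; lia.
    rewrite hb ltr_nat; move: km; rewrite mulSnr; lia.
have all_served : forall k, (k < M)%N -> decodable F sched code a0 i J j k (b.+1 * F)%N.
  by move=> k kM; apply: (Q b k kM) => //.
have := rank_bound all_served.
rewrite count_periodic; last by move=> s; rewrite recv_mod.
move: hc; set c := count _ _ => hc hM.
have : (b * b <= b.+1 * c)%N by [].
nia.
Qed.

Definition Sset (c : config K N) : {set subflow K N} :=
  [set v : subflow K N | let: (i, J, j) := v in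
     match c i with Some (J', T) => (J' == J) && (j \in T) | None => false end].

Lemma Sset_stable c : valid_config c -> stable (Sset c).
Proof.
case=> h1 h2; apply/andP; split.
  apply/forallP => -[[i J] j]; apply/implyP; rewrite inE.
  case e: (c i) => [[J' T]|] // /andP[/eqP <- jT].
  have [J0 TJ] := h1 _ _ _ e; by rewrite /is_subflow J0 (subsetP TJ).
apply/forallP => -[[i J] j]; apply/implyP; rewrite inE.
case e: (c i) => [[J1 T1]|] // /andP[/eqP E1 jT1]; subst J1.
apply/forallP => -[[i' J'] j']; apply/implyP; rewrite inE.
case e': (c i') => [[J2 T2]|] // /andP[/eqP E2 jT2]; subst J2.
rewrite /adjacent; case: (eqVneq i i') => [E|ne].
  subst i'; move: e'; rewrite e => -[<- _] /=; rewrite eqxx /= orbF.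
  by apply/negP => /andP[/eqP nv /eqP E]; apply: nv; rewrite E.
rewrite /= orbF; apply/negP => /andP[_ /eqP E]; subst j'.
by rewrite (disjointFr (h2 _ _ _ _ _ _ ne e e') jT1) in jT2.
Qed.

Definition lam0 (S : {set subflow K N}) : rat := \sum_(l < F) ((Sset (sched l) == S)%:R / F%:R).
Definition y0 (v : subflow K N) : rat := \sum_(l < F) ((v \in Sset (sched l))%:R / F%:R).

Lemma lam0_repr : repr_by lam0 y0.
Proof.
have Fn0 : (F%:R : rat) != 0 by rewrite pnatr_eq0 -lt0n.
split.
- by move=> S; apply: sumr_ge0 => l _; apply: divr_ge0.
- move=> S nz.
  have [l /eqP <-] : exists l : 'I_F, Sset (sched l) == S.
    apply/existsP; apply: contraNT nz => /existsPn h; apply/eqP.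
    by apply: big1 => l _; rewrite (negbTE (h l)) mul0r.
  exact: Sset_stable (hval (ltn_ord l)).
- rewrite /lam0 exchange_big /=.
  rewrite (eq_bigr (fun _ => F%:R^-1)); last first.
    move=> l _; rewrite -mulr_suml (bigD1 (Sset (sched l))) //= eqxx big1 ?addr0 ?mul1r //.
    by move=> S /negbTE; rewrite eq_sym => ->.
  by rewrite sumr_const card_ord -[F%:R^-1 *+ F]mulr_natr mulVf.
- move=> v _; rewrite /y0 /lam0.
  rewrite (eq_bigr (fun S => \sum_(l < F) ((Sset (sched l) == S)%:R / F%:R * (v \in S)%:R)));
    last by move=> S _; rewrite mulr_suml.
  rewrite exchange_big /=; apply: eq_bigr => l _.
  rewrite (bigD1 (Sset (sched l))) //= eqxx big1 ?addr0; last first.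
    by move=> S /negbTE; rewrite eq_sym => ->; rewrite !mul0r.
  by rewrite mul1r mulrC.
Qed.

Lemma conv_STAB : (forall i J, J != set0 -> 0 <= r i J) ->
  (forall i J, J != set0 -> exists b : nat, r i J * F%:R = b%:R) ->
  in_STAB (enhanced r).
Proof.
move=> r0 hint.
suff [lam hl] : exists lam, repr_by lam (enhanced r) by exists lam.
apply: (down_closed lam0_repr) => -[[i J] j] /andP[J0 jJ] /=; rewrite r0 //=.
have [b hb] := hint i J J0.
have hy : y0 (i, J, j) = (count (recv F sched i J j) (index_iota 0 F))%:R / F%:R.
  rewrite /y0 -mulr_suml -sum1_count natr_sum big_mkord; congr (_ / _).
  rewrite [RHS]big_mkcond /=; apply: eq_bigr => l _.
  by rewrite inE /recv /slot_cfg modn_small //; case: (sched l i) => [[? ?]|] //; case: (_ && _).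
rewrite hy ler_pdivlMr ?ltr0n // hb ler_nat.
exact: count_lb J0 jJ hb.
Qed.
End Conv.


Section Coding2.
Variables (K N F : nat) (sched : nat -> config K N) (Fld : finFieldType)
  (R : 'I_K -> {set 'I_N} -> nat) (alpha : nat -> Fld).

Definition selp (cd : coding K N Fld) (a : arrivals K N) i J t0 : seq nat :=
  take (R i J) [seq k <- iota 0 (cumA a i J t0) | pb (present F sched cd a i J k t0)].

Definition step (cd : coding K N Fld) (a : arrivals K N) (s : nat) (i : 'I_K) (m : nat) : Fld :=
  match slot_cfg F sched s i with
  | Some (J, T) =>
      if (m \in selp cd a i J (s %/ F * F)%N) && pb (present F sched cd a i J m s)
      then alpha (s %% F)%N ^+ index m (selp cd a i J (s %/ F * F)%N) else 0
  | None => 0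
  end.

Fixpoint pref (a : arrivals K N) (n : nat) : nat -> 'I_K -> nat -> Fld :=
  match n with
  | 0 => fun _ _ _ => 0
  | n'.+1 => fun s => if (s < n')%N then pref a n' s
                     else if s == n' then step (fun _ => pref a n') a n' else fun _ _ => 0
  end.

Definition code2 : coding K N Fld := fun a s => pref a s.+1 s.

Lemma pref_code a n s : (s < n)%N -> pref a n s = code2 a s.
Proof.
elim: n => // n IH; rewrite ltnS leq_eqVlt => /orP[/eqP ->|lt]; first by [].
by rewrite /= lt IH.
Qed.

Lemma cumA_ext (a a' : arrivals K N) i J t :
  (forall i J s, (s < t)%N -> a i J s = a' i J s) -> cumA a i J t = cumA a' i J t.
Proof. by move=> h; apply: eq_bigr => s _; rewrite h. Qed.

Lemma present_ext (cd cd' : coding K N Fld) (a a' : arrivals K N) i J k t :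
  (forall s, (s < t)%N -> forall i m, cd a s i m = cd' a' s i m) ->
  (forall i J s, (s < t)%N -> a i J s = a' i J s) ->
  present F sched cd a i J k t <-> present F sched cd' a' i J k t.
Proof.
move=> hc ha; rewrite /present (cumA_ext _ _ ha).
have e : served F sched cd a i J k t <-> served F sched cd' a' i J k t.
  rewrite /served /decodable; split => h j jJ; have [w hw] := h j jJ; exists w => m;
    rewrite -hw; apply: eq_bigr => s _; by rewrite hc.
tauto.
Qed.

Lemma step_ext (cd cd' : coding K N Fld) (a a' : arrivals K N) s :
  (forall s', (s' < s)%N -> forall i m, cd a s' i m = cd' a' s' i m) ->
  (forall i J s', (s' < s)%N -> a i J s' = a' i J s') ->
  forall i m, step cd a s i m = step cd' a' s i m.
Proof.
move=> hc ha i m; rewrite /step; case: (slot_cfg F sched s i) => [[J T]|] //.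
have le : (s %/ F * F <= s)%N by rewrite leq_trunc_div.
have eS : selp cd a i J (s %/ F * F)%N = selp cd' a' i J (s %/ F * F)%N.
  rewrite /selp (cumA_ext _ _ (fun i J s' h => ha i J s' (leq_trans h le))).
  congr take; apply: eq_filter => k; apply: pb_ext; apply: present_ext.
    by move=> s' h; apply: hc; exact: leq_trans h le.
  by move=> i' J' s' h; apply: ha; exact: leq_trans h le.
by rewrite eS (pb_ext (present_ext i J m hc ha)).
Qed.

Lemma code_step a s i m : code2 a s i m = step code2 a s i m.
Proof.
rewrite /code2 /= ltnn eqxx; apply: step_ext => // s' h i' m'.
by rewrite pref_code.
Qed.

Lemma pref_ext n (a a' : arrivals K N) : (forall i J s, (s < n)%N -> a i J s = a' i J s) ->
  forall s i m, pref a n.+1 s i m = pref a' n.+1 s i m.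
Proof.
elim: n => [|n IH] in a a' * => ha s i m /=.
  by case: ifP => // _; apply: step_ext.
have IH' := IH a a' (fun i J s h => ha i J s (ltnW h)).
case: ifP => h; first exact: IH'.
case: ifP => // _; apply: step_ext => // s' h' i' m'.
exact: IH'.
Qed.

Lemma code2_causal : causal code2.
Proof.
move=> a a' s h; apply: functional_extensionality => i; apply: functional_extensionality => m.
by rewrite /code2; apply: pref_ext.
Qed.

Lemma code2_valid a : valid_coding F sched code2 a.
Proof.
move=> s i J T e m; rewrite code_step /step e.
by case: ifP => [/andP[_ /pbP]|] //; rewrite eqxx.
Qed.

Lemma sum_delta (s : seq nat) (P : pred nat) (f : nat -> Fld) m : uniq s ->
  \sum_(x <- s | P x) f x * (m == x)%:R = if (m \in s) && P m then f m else 0.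
Proof.
elim: s => [|x s IH] /=; first by rewrite big_nil.
move=> /andP[xs us]; rewrite big_cons IH // in_cons.
case: (eqVneq m x) => [->|nmx] /=.
  by rewrite (negbTE xs) /=; case: (P x); rewrite ?mulr1 ?addr0.
by case: (P x); rewrite ?mulr0 ?add0r.
Qed.

Lemma cumA_mono (a : arrivals K N) i J t t' : (t <= t')%N -> (cumA a i J t <= cumA a i J t')%N.
Proof.
move/subnK <-; elim: (t' - t)%N => [|d IH]; rewrite ?add0n //.
rewrite addSn /cumA big_ord_recr /=; exact: leq_trans IH (leq_addr _ _).
Qed.

Lemma mem_sel a i J t0 k (older : seq nat) : uniq older ->
  (forall k', k' \in older <-> (k' < k)%N /\ present F sched code2 a i J k' t0) ->
  present F sched code2 a i J k t0 -> (size older < R i J)%N ->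
  k \in selp code2 a i J t0.
Proof.
move=> uo ho pk so; have [kc _] := pk; rewrite /selp.
set p := fun k' => pb (present F sched code2 a i J k' t0).
have pkT : p k by apply/pbP.
have -> : iota 0 (cumA a i J t0) = iota 0 k ++ k :: iota k.+1 (cumA a i J t0 - k.+1).
  rewrite -{1}(subnKC (ltnW kc)) iotaD add0n; congr (_ ++ _).
  by rewrite -(subnSK kc).
rewrite filter_cat /= pkT.
set L1 := filter p (iota 0 k).
have sz : size L1 = size older.
  apply: perm_size; apply: uniq_perm; [exact: filter_uniq (iota_uniq _ _) | exact: uo |].
  move=> k'; rewrite mem_filter mem_iota add0n /=; apply/idP/idP.
    by move=> /andP[/pbP pp lk]; apply/ho.
  by move=> /ho [lk pp]; apply/andP; split => //; apply/pbP.
rewrite take_cat ltnNge (ltnW (leq_trans _ so)) ?sz //= mem_cat.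
have : (0 < R i J - size older)%N by rewrite subn_gt0.
by case: (R i J - size older)%N => // x _ /=; rewrite in_cons eqxx orbT.
Qed.

Hypotheses (F0 : (0 < F)%N) (hval : forall l, (l < F)%N -> valid_config (sched l)).

Lemma frame_div n l : (0 < n)%N -> (l < F)%N ->
  ((n.-1 * F + l) %/ F * F = n.-1 * F)%N /\ ((n.-1 * F + l) %% F = l)%N.
Proof.
move=> n0 lF; split; first by rewrite divnMDl // divn_small // addn0.
by rewrite modnMDl modn_small.
Qed.

Lemma Uspan a n i J j l : (0 < n)%N -> (l < F)%N -> recv F sched i J j (n.-1 * F + l)%N ->
  spanR F sched code2 a i J j (n * F)%N
    (fun m => if m \in selp code2 a i J (n.-1 * F)%N
              then alpha l ^+ index m (selp code2 a i J (n.-1 * F)%N) else 0).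
Proof.
move=> n0 lF rc.
set Sel := selp code2 a i J (n.-1 * F)%N.
have [ed em] := frame_div n0 lF.
have sn : (n.-1 * F + l < n * F)%N.
  by rewrite -[in (n * F)%N](prednK n0) mulSnr ltn_add2l.
have uS : uniq Sel by apply: take_uniq; apply: filter_uniq; apply: iota_uniq.
move: (rc); rewrite /recv; case e: (slot_cfg F sched (n.-1 * F + l) i) => [[J' T]|] //.
move=> /andP[/eqP EJ jT]; subst J'.
have jJ : j \in J.
  move: e; rewrite /slot_cfg em => e.
  by have [_ /subsetP TJ] := (hval lF).1 _ _ _ e; apply: TJ.
have hcode m : code2 a (n.-1 * F + l)%N i m =
    if (m \in Sel) && pb (present F sched code2 a i J m (n.-1 * F + l)%N)
    then alpha l ^+ index m Sel else 0.
  by rewrite code_step /step e ed em.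
pose g := fun x m => alpha l ^+ index x Sel * (m == x)%:R.
have hsum := @spanR_sum _ _ _ F sched code2 a i J j (n * F)%N _ Sel
  (fun x => ~~ pb (present F sched code2 a i J x (n.-1 * F + l)%N)) g.
have hgen := spanR_gen code2 a sn rc.
apply: spanR_ext (spanRD hgen (hsum _)).
  move=> m; rewrite hcode /g sum_delta //.
  by case: (m \in Sel); case: (pb _); rewrite /= ?addr0 ?add0r.
move=> x xS /pbP npx; rewrite /g.
apply: (spanRZ _ (v:=fun m => (m == x)%:R)).
have xc : (x < cumA a i J (n.-1 * F + l))%N.
  apply: leq_trans (cumA_mono a i J (leq_addr l _)).
  by move: xS; rewrite /Sel /selp => /mem_take; rewrite mem_filter mem_iota => /andP[_ /andP[_]].
case: (pbP (served F sched code2 a i J x (n.-1 * F + l)%N)) => [sv|nsv]; last first.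
  by exfalso; apply: npx.
exact: spanR_mono (ltnW sn) (sv j jJ).
Qed.

Lemma code2_guarantee (r : 'I_K -> {set 'I_N} -> rat) :
  (forall i J, J != set0 -> r i J * F%:R = (R i J)%:R) ->
  (forall i J j, J != set0 -> j \in J -> (R i J <= count (recv F sched i J j) (iota 0 F))%N) ->
  (forall l l', (l < F)%N -> (l' < F)%N -> alpha l = alpha l' -> l = l') ->
  forall a, frame_guarantee F sched code2 a r.
Proof.
move=> hR hcnt hal a n i J n0 J0 k older uo ho pk so j jJ.
have so' : (size older < R i J)%N by rewrite -(ltr_nat rat) -hR.
have kS := mem_sel uo ho pk so'.
set Sel := selp code2 a i J (n.-1 * F)%N in kS *.
pose ls := [seq l <- iota 0 F | recv F sched i J j l].
pose P := size Sel.
have PR : (P <= R i J)%N by rewrite /P /Sel /selp size_take; case: ltnP.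
have Pls : (P <= size ls)%N by rewrite size_filter; exact: leq_trans PR (hcnt _ _ _ J0 jJ).
have uls : uniq ls by apply: filter_uniq; apply: iota_uniq.
have lsF y : (y < size ls)%N -> (nth 0%N ls y < F)%N /\ recv F sched i J j (nth 0%N ls y).
  move=> ys; have := mem_nth 0%N ys; rewrite mem_filter mem_iota add0n => /andP[-> /andP[_ ->]].
  by [].
pose av : 'rV[Fld]_P := \row_(y < P) alpha (nth 0%N ls y).
pose M := Vandermonde P av.
have Mu : M \in unitmx.
  rewrite unitmxE det_Vandermonde unitfE; apply/prodf_neq0 => x _; apply/prodf_neq0 => y xy.
  rewrite !mxE subr_eq0; apply/eqP => e.
  have yl : (y < size ls)%N := leq_trans (ltn_ord y) Pls.
  have xl : (x < size ls)%N := leq_trans (ltn_ord x) Pls.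
  have := hal _ _ (lsF _ yl).1 (lsF _ xl).1 e => /eqP; rewrite nth_uniq // => /eqP ey.
  by move: xy; rewrite ey ltnn.
have MM : M *m invmx M = 1%:M by apply: mulmxV.
have kP : (index k Sel < P)%N by rewrite index_mem.
pose x0 : 'I_P := Ordinal kP.
have hs := @spanR_sum _ _ _ F sched code2 a i J j (n * F)%N _ (index_enum 'I_P) xpredT
  (fun y m => invmx M y x0 * (if m \in Sel then alpha (nth 0%N ls y) ^+ index m Sel else 0)).
apply: spanR_ext (hs _); last first.
  move=> y _ _; apply: (spanRZ _ (v:=fun m => if m \in Sel then alpha (nth 0%N ls y) ^+ index m Sel else 0)).
  have yl : (y < size ls)%N := leq_trans (ltn_ord y) Pls.
  have [ylF yr] := lsF _ yl.
  apply: Uspan => //.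
  by rewrite recv_mod (frame_div n0 ylF).2.
move=> m /=; case mS: (m \in Sel); last first.
  rewrite big1 => [|y _]; last by rewrite mulr0.
  by case: eqP => // e; move: mS; rewrite e kS.
have mP : (index m Sel < P)%N by rewrite index_mem.
pose xm : 'I_P := Ordinal mP.
have := MM; move/matrixP => /(_ xm x0); rewrite !mxE => e.
have -> : (m == k) = (xm == x0).
  apply/eqP/eqP => [E|/(congr1 val) /= ei]; first by apply: val_inj; rewrite /= E.
  by rewrite -(nth_index 0%N mS) ei nth_index.
rewrite -e; apply: eq_bigr => y _; rewrite !mxE mulrC.
by [].
Qed.

End Coding2.


Lemma intq (q : rat) (F : nat) : 0 <= q -> (`|denq q| %| F)%N ->
  q * F%:R = (`|numq (q * F%:R)|%N)%:R.
Proof.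
move=> q0 /dvdnP [c ->].
have e : q * (c * `|denq q|)%N%:R = (numq q * c%:Z)%:~R.
  rewrite natrM natr_absz normr_denq intrM mulrC -mulrA [_ * q]mulrC -numqE.
  by rewrite mulrC.
rewrite e numq_int natr_absz ger0_norm // mulr_ge0 //.
by rewrite numq_ge0.
Qed.

Lemma dvd_prod (I : finType) (f : I -> nat) i0 : (f i0 %| \prod_i f i)%N.
Proof. by rewrite (bigD1 i0) //= dvdn_mulr. Qed.

Section Build.
Variables (K N : nat) (r : 'I_K -> {set 'I_N} -> rat) (lam : {set subflow K N} -> rat).
Hypotheses (hl : repr_by lam (enhanced r)) (r0 : forall i J, J != set0 -> 0 <= r i J).
Local Notation sf := (subflow K N).

Definition Fn : nat := (\prod_(S : {set sf}) `|denq (lam S)|%N *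
   \prod_(i : 'I_K) \prod_(J : {set 'I_N}) `|denq (r i J)|%N)%N.

Lemma Fn_gt0 : (0 < Fn)%N.
Proof.
rewrite muln_gt0; apply/andP; split; apply: prodn_gt0 => ? //; try apply: prodn_gt0 => ?;
  by rewrite absz_gt0 denq_neq0.
Qed.

Definition nS (S : {set sf}) : nat := `|numq (lam S * Fn%:R)|%N.
Definition Rn i J : nat := `|numq (r i J * Fn%:R)|%N.

Lemma hnS S : lam S * Fn%:R = (nS S)%:R.
Proof.
have [h1 _ _ _] := hl; apply: intq => //.
by rewrite /Fn dvdn_mulr // (dvd_prod (fun S => `|denq (lam S)|%N)).
Qed.

Lemma hRn i J : J != set0 -> r i J * Fn%:R = (Rn i J)%:R.
Proof.
move=> J0; apply: intq; first exact: r0.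
rewrite /Fn dvdn_mull // (dvdn_trans _ (dvd_prod (fun i => \prod_(J : {set 'I_N}) `|denq (r i J)|%N) i)) //.
exact: (dvd_prod (fun J => `|denq (r i J)|%N)).
Qed.

Definition seqS : seq {set sf} := flatten [seq nseq (nS X) X | X <- index_enum {set sf}].

Lemma count_seqS (P : pred {set sf}) : count P seqS = (\sum_S P S * nS S)%N.
Proof.
rewrite /seqS; elim: (index_enum _) => [|S s IH]; first by rewrite big_nil.
by rewrite big_cons /= count_cat count_nseq IH.
Qed.

Lemma count_seqS_rat (P : pred {set sf}) : (count P seqS)%:R = \sum_S (P S)%:R * lam S * Fn%:R :> rat.
Proof.
rewrite count_seqS natr_sum; apply: eq_bigr => S _; by rewrite natrM -hnS mulrA.
Qed.

Lemma size_seqS : size seqS = Fn.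
Proof.
have [_ _ h3 _] := hl.
apply/eqP; rewrite -(eqr_nat rat) -count_predT count_seqS_rat.
rewrite (eq_bigr (fun S => lam S * Fn%:R)); last by move=> S _; rewrite mul1r.
by rewrite -mulr_suml h3 mul1r.
Qed.

Definition cfg_of (S : {set sf}) : config K N := fun i =>
  match [pick v in S | v.1.1 == i] with
  | Some v => Some (v.1.2, [set j | (i, v.1.2, j) \in S])
  | None => None
  end.

Definition schedB (l : nat) : config K N := cfg_of (nth set0 seqS l).

Lemma stableP (S : {set sf}) : stable S ->
  (forall v, v \in S -> is_subflow v) /\ (forall v w, v \in S -> w \in S -> ~~ adjacent v w).
Proof.
move=> /andP[/forallP h1 /forallP h2]; split.
  by move=> v vS; exact: (implyP (h1 v) vS).
by move=> v w vS wS; have /forallP/(_ w)/implyP := implyP (h2 v) vS; apply.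
Qed.

Lemma stable_seqS l : (l < Fn)%N -> stable (nth set0 seqS l).
Proof.
move=> lF; set S := nth set0 seqS l.
have : S \in seqS by apply: mem_nth; rewrite size_seqS.
rewrite -has_pred1 has_count count_seqS (bigD1 S) //= eqxx mul1n big1 ?addn0; last first.
  by move=> S' /negbTE ->.
move=> pos; have [_ h2 _ _] := hl; apply: h2.
apply: contraTneq pos => e.
have : (nS S)%:R = 0 :> rat by rewrite -hnS e mul0r.
by move/eqP; rewrite pnatr_eq0 => /eqP ->.
Qed.

Lemma recv_cfg (S : {set sf}) i J j : stable S ->
  (match cfg_of S i with Some (J', T) => (J' == J) && (j \in T) | None => false end)
  = ((i, J, j) \in S).
Proof.
move=> /stableP [h1 h2]; rewrite /cfg_of; case: pickP => [[[i0 J0] j0] /andP[vS /eqP /= vi]|none].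
  subst i0; rewrite /= inE.
  case: (eqVneq J0 J) => [->|ne] //=.
  apply/esym/negP => wS; have := h2 _ _ vS wS.
  rewrite /adjacent eqxx (negbTE ne) /= orbT andbT => /negPn /eqP [e _].
  by move: ne; rewrite e eqxx.
by have := none (i, J, j); rewrite /= eqxx andbT => ->.
Qed.

Lemma valid_cfg S : stable S -> valid_config (cfg_of S).
Proof.
move=> st; have [h1 h2] := stableP st; split.
  move=> i J T; rewrite /cfg_of; case: pickP => // -[[i0 J0] j0] /andP[vS /eqP /= vi] [e1 e2]; subst J T.
  subst i0; have /andP[J0n _] := h1 _ vS; split => //.
  by apply/subsetP => j; rewrite inE => /h1 /andP[].
move=> i i' J T J' T' ne; rewrite /cfg_of.
case: pickP => // -[[i0 J0] j0] /andP[vS /eqP /= vi] [e1 e2]; subst i0 J T.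
case: pickP => // -[[i1 J1] j1] /andP[wS /eqP /= wi] [e1 e2]; subst i1 J' T'.
apply/pred0P => j /=; rewrite !inE; apply/negP => /andP[a1 a2].
have := h2 _ _ a1 a2; rewrite /adjacent eqxx /= andbT => /negPn /eqP E.
by move: ne; case: E => -> _; rewrite eqxx.
Qed.

Lemma count_recv i J j : J != set0 -> j \in J ->
  count (recv Fn schedB i J j) (iota 0 Fn) = Rn i J.
Proof.
move=> J0 jJ.
have e : count (recv Fn schedB i J j) (iota 0 Fn) = count (fun S : {set sf} => (i, J, j) \in S) seqS.
  rewrite -{1}(mkseq_nth set0 seqS) size_seqS /mkseq count_map.
  apply: eq_in_count => l; rewrite mem_iota add0n => /andP[_ lF] /=.
  by rewrite /recv /slot_cfg modn_small // /schedB recv_cfg // stable_seqS.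
apply/eqP; rewrite e -(eqr_nat rat) count_seqS_rat -hRn //.
have [_ _ _ h4] := hl.
have sub : is_subflow (i, J, j) by rewrite /is_subflow J0 jJ.
have := h4 _ sub; rewrite /= => ->.
by rewrite -mulr_suml; apply/eqP; congr (_ * _); apply: eq_bigr => S _; rewrite mulrC.
Qed.

End Build.

End Helpers.
Import Helpers.

Theorem theorem6 (K N : nat) (r : 'I_K -> {set 'I_N} -> rat)
    (r_ge0 : forall i J, J != set0 -> 0 <= r i J) :
  in_STAB (enhanced r) <->
  exists (F : nat) (sched : nat -> config K N) (Fld : finFieldType)
         (code : coding K N Fld),
    [/\ (0 < F)%N,
        forall s, (s < F)%N -> valid_config (sched s),
        causal code,
        forall i J, J != set0 -> exists b : nat, r i J * F%:R = b%:R
      & forall a : arrivals K N,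
          valid_coding F sched code a /\ frame_guarantee F sched code a r].
Proof.
split.
- move=> [lam hl0].
  have hl : repr_by lam (enhanced r) := hl0.
  have [p pF pp] := prime_above (Fn r lam).
  pose alpha := fun l : nat => (l%:R : 'F_p).
  have hval : forall s, (s < Fn r lam)%N -> valid_config (schedB r lam s).
    by move=> s sF; apply: valid_cfg; apply: stable_seqS.
  exists (Fn r lam), (schedB r lam), 'F_p, (code2 (Fn r lam) (schedB r lam) (Rn r lam) alpha).
  split.
  + exact: Fn_gt0.
  + exact: hval.
  + exact: code2_causal.
  + by move=> i J J0; exists (Rn r lam i J); exact: hRn.
  + move=> a; split; first exact: code2_valid.
    apply: code2_guarantee.
    * exact: Fn_gt0.
    * exact: hval.
    * by move=> i J J0; exact: hRn.
    * by move=> i J j J0 jJ; rewrite count_recv.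
    * move=> l l' lF l'F e.
      have := congr1 val e; rewrite /alpha /= !val_Fp_nat // !modn_small //.
        exact: ltn_trans l'F pF.
      exact: ltn_trans lF pF.
- move=> [F [sched [Fld [code [F0 hval hc hint hall]]]]].
  apply: (conv_STAB F0 hval) => // a; exact: (hall a).2.
Qed.
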